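(* Let $Q$ be the quiver with one vertex and $2e$ loops, $e\ge1$, and let $d\geq 1$, $v\in\mathbb{Z}$. Then $S^d_v$ consists of the partitions $d=d_1+\dots+d_k$ such that for all $1\le i\le k$ $$\tfrac12 d_i\Big(\sum_{j<i}d_j-\sum_{j>i}d_j\Big)+\frac{vd_i}{d}\in\mathbb{Z}.$$ Moreover, $S^d_v=\{d\}$ if and only if either $\gcd(d,v)=1$ and $d\not\equiv2\pmod 4$, or $\gcd(d,v)=2$ and $d\equiv2\pmod4$.
   Context: Here $R(d)=\mathfrak{gl}(d)^{\oplus 2e}$ with $G(d)=GL(d)$ acting by conjugation, $\mathfrak{g}(d)=\mathfrak{gl}(d)$, diagonal torus with weights $\beta_1,\dots,\beta_d$, $\tau_d=\frac1d\sum_a\beta_a$. For a cocharacter $\lambda$, $n_\lambda=\langle\lambda,\det(R(d)^\vee)^{\lambda>0}\rangle-\langle\lambda,\det(\mathfrak{g}(d)^\vee)^{\lambda>0}\rangle$ ($V^{\lambda>0}$: span of weights pairing positively with $\lambda$). A cocharacter has associated partition $(d_j)_j$ if its $j$-th distinct weight on $\beta_1,\dots,\beta_d$ occurs $d_j$ times. $S^d_v$ is the set of partitions of $d$ such that $n_\lambda/2+\langle\lambda,v\tau_d\rangle\in\mathbb{Z}$ for every cocharacter $\lambda$ with that associated partition; $\{d\}$ denotes the one-term partition. *)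

(* Defs.v *)
From mathcomp Require Import all_boot all_order all_algebra.
Unset Printing Implicit Defensive.
Import Order.TTheory GRing.Theory Num.Theory.
Local Open Scope ring_scope.

(* Quiver with one vertex and 2e loops, dimension d.
   A cocharacter of the diagonal torus of GL(d) is lam : 'I_d -> int;
   it pairs with the weight beta_a - beta_b as lam a - lam b. *)

(* < lam, det(R(d)^vee)^{lam>0} > : R(d) = gl(d)^{2e} has weights beta_a - beta_b,
   one copy for each (k, a, b) with k < 2e; R(d)^vee has weights beta_b - beta_a. *)
Definition pair_detR (e d : nat) (lam : 'I_d -> int) : int :=
  \sum_(k < (2 * e)%N) \sum_(a < d) \sum_(b < d)
     (if 0 < lam b - lam a then lam b - lam a else 0).

(* < lam, det(g(d)^vee)^{lam>0} >, g(d) = gl(d). *)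
Definition pair_detg (d : nat) (lam : 'I_d -> int) : int :=
  \sum_(a < d) \sum_(b < d) (if 0 < lam b - lam a then lam b - lam a else 0).

Definition n_lam (e d : nat) (lam : 'I_d -> int) : int :=
  pair_detR e d lam - pair_detg d lam.

(* < lam, v tau_d >, tau_d = (1/d) sum_a beta_a *)
Definition pair_vtau (d : nat) (v : int) (lam : 'I_d -> int) : rat :=
  (v%:~R / d%:R) * (\sum_(a < d) lam a)%:~R.

Definition assoc_part (d : nat) (lam : 'I_d -> int) : seq nat :=
  let l := [seq lam i | i <- enum 'I_d] in
  [seq count_mem x l | x <- sort (fun x y : int => y <= x) (undup l)].

Definition is_part (d : nat) (s : seq nat) : Prop :=
  all (fun x => 0 < x)%N s /\ sumn s = d.

Definition in_S (e d : nat) (v : int) (s : seq nat) : Prop :=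
  is_part d s /\
  forall lam : 'I_d -> int, assoc_part d lam = s ->
    ((n_lam e d lam)%:~R / 2 + pair_vtau d v lam : rat) \is a Num.int.

(* Main.v *)
Require Import Defs.
From mathcomp Require Import all_boot all_order all_algebra.
From mathcomp Require Import zify ring lra.
From Stdlib Require Classical_Prop.
Import Order.TTheory GRing.Theory Num.Theory.
Local Open Scope ring_scope.

Definition Fp (x y : int) : int := if 0 < y - x then y - x else 0.

Lemma sum_undup (R : nmodType) (r : seq int) (H : int -> R) :
  \sum_(x <- r) H x = \sum_(x <- undup r) H x *+ count_mem x r.
Proof. by rewrite -big_undup_iterop_count. Qed.

Lemma sum_nth_w (w : int -> nat) (u : seq int) :
  \sum_(i < size u) (nth 0 u i) * (nth 0%N (map w u) i)%:R
  = \sum_(x <- u) x * (w x)%:R.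
Proof.
rewrite (big_nth 0) big_mkord; apply: eq_bigr => i _.
by rewrite (nth_map 0).
Qed.

Lemma ord_recl_nat (R : nmodType) n (F : nat -> R) :
  \sum_(i < n.+1) F i = F 0%N + \sum_(i < n) F i.+1.
Proof. by rewrite big_ord_recl; congr (_ + _); apply: eq_bigr => i _; rewrite lift0. Qed.

Lemma Gind (w : int -> nat) (u : seq int) :
  sorted (fun x y : int => y <= x) u -> uniq u ->
  \sum_(x <- u) \sum_(y <- u) ((w x * w y)%:R * Fp x y : int)
  = \sum_(i < size u) (nth 0 u i) * ((nth 0%N (map w u) i)%:R *
       ((sumn (drop i.+1 (map w u)))%:R - (sumn (take i (map w u)))%:R)).
Proof.
elim: u => [|x u IH]; first by rewrite !big_nil big_ord0.
move=> hs /andP[hx hu].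
have hs' : sorted (fun x y : int => y <= x) u by exact: path_sorted hs.
have hall : all (fun y => y <= x) u.
  by apply: (order_path_min _ hs) => a b c h1 h2; exact: le_trans h2 h1.
have hlt : forall y, y \in u -> y < x.
  move=> y hy; rewrite lt_neqAle (allP hall y hy) andbT.
  by apply/negP => /eqP e; move: hx; rewrite -e hy.
change (size (x :: u)) with (size u).+1.
rewrite (@ord_recl_nat _ _ (fun i : nat => (x :: u)`_i *
     ((nth 0%N [seq w i | i <- x :: u] i)%:R *
      ((sumn (drop i.+1 [seq w i | i <- x :: u]))%:R -
       (sumn (take i [seq w i | i <- x :: u]))%:R)))) big_cons.
under [X in _ = _ + X]eq_bigr => i _ do rewrite /=.
rewrite [X in _ = X + _]/= big_cons.
have -> : Fp x x = 0 by rewrite /Fp subrr ltxx.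
have -> : \sum_(y <- u) ((w x * w y)%:R * Fp x y : int) = 0.
  rewrite big_seq big1 // => y hy; rewrite /Fp.
  have := hlt y hy; rewrite -subr_gt0 => h.
  by rewrite ltNge -opprB oppr_le0 (ltW h) /= mulr0.
under eq_bigr do rewrite big_cons.
rewrite big_split /= (IH hs' hu) mulr0 !add0r drop0 subr0.
have -> : \sum_(i < size u)
    u`_i * ((nth 0%N [seq w i | i <- u] i)%:R *
      ((sumn (drop i.+1 [seq w i | i <- u]))%:R -
       (w x + sumn (take i [seq w i | i <- u]))%:R))
  = \sum_(i < size u)
    u`_i * ((nth 0%N [seq w i | i <- u] i)%:R *
      ((sumn (drop i.+1 [seq w i | i <- u]))%:R -
       (sumn (take i [seq w i | i <- u]))%:R))
    - (w x)%:R * \sum_(i < size u) u`_i * (nth 0%N [seq w i | i <- u] i)%:R.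
  rewrite mulr_sumr -sumrB; apply: eq_bigr => i _; rewrite natrD; ring.
rewrite sum_nth_w.
have -> : \sum_(j <- u) ((w j * w x)%:R * Fp j x : int)
   = \sum_(j <- u) ((w x)%:R * (w j)%:R * (x - j)).
  rewrite big_seq_cond [RHS]big_seq_cond; apply: eq_bigr => j /andP[hj _].
  have := hlt j hj; rewrite -subr_gt0 /Fp => ->; rewrite natrM; ring.
have -> : sumn [seq w i | i <- u] = \sum_(j <- u) w j by rewrite sumnE big_map.
rewrite natr_sum mulr_sumr mulr_sumr.
rewrite addrC [RHS]addrCA; congr (_ + _).
rewrite mulr_sumr -sumrB; apply: eq_bigr => j _; ring.
Qed.

Definition lst d (lam : 'I_d -> int) := [seq lam i | i <- enum 'I_d].
Definition ul d (lam : 'I_d -> int) := sort (fun x y : int => y <= x) (undup (lst d lam)).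

Lemma assoc_partE d lam :
  assoc_part d lam = map (fun x => count_mem x (lst d lam)) (ul d lam).
Proof. by []. Qed.

Lemma sum_lst (R : nmodType) d (lam : 'I_d -> int) (G : int -> R) :
  \sum_(a < d) G (lam a) = \sum_(x <- lst d lam) G x.
Proof. by rewrite big_map big_enum /=; apply: eq_bigl => i; rewrite inE. Qed.

Lemma ul_sorted d lam : sorted (fun x y : int => y <= x) (ul d lam).
Proof. by apply: sort_sorted => x y; exact: le_total. Qed.

Lemma ul_uniq d lam : uniq (ul d lam).
Proof. by rewrite sort_uniq undup_uniq. Qed.

Lemma sum_ul (R : nmodType) d (lam : 'I_d -> int) (H : int -> R) :
  \sum_(x <- lst d lam) H x = \sum_(x <- ul d lam) H x *+ count_mem x (lst d lam).
Proof.
rewrite sum_undup; apply: perm_big; by rewrite perm_sym perm_sort.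
Qed.

Lemma detgE d (lam : 'I_d -> int) :
  pair_detg d lam = \sum_(x <- ul d lam) \sum_(y <- ul d lam)
     ((count_mem x (lst d lam) * count_mem y (lst d lam))%:R * Fp x y).
Proof.
rewrite /pair_detg.
rewrite (sum_lst _ _ _ (fun x : int => \sum_(b < d) Fp x (lam b))) sum_ul.
apply: eq_bigr => x _.
rewrite (sum_lst _ _ _ (fun y : int => Fp x y)) sum_ul -mulr_natl mulr_sumr.
apply: eq_bigr => y _.
rewrite -mulr_natl -[Fp x y *+ _]mulr_natl natrM; ring.
Qed.

Lemma sumlamE d (lam : 'I_d -> int) :
  \sum_(a < d) lam a = \sum_(i < size (ul d lam))
     (nth 0 (ul d lam) i) * (nth 0%N (assoc_part d lam) i)%:R.
Proof.
rewrite (sum_lst _ _ _ id) sum_ul assoc_partE sum_nth_w.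
by apply: eq_bigr => x _; rewrite mulr_natr.
Qed.

Lemma intr_natr (n : nat) : ((n%:R : int)%:~R : rat) = n%:R.
Proof. by rewrite natz. Qed.
Lemma intr_sumo n (F : 'I_n -> int) : ((\sum_(i<n) F i)%:~R : rat) = \sum_(i<n) (F i)%:~R.
Proof. by apply: big_morph => [x y|]; rewrite ?intrD. Qed.

Definition Cc (e d : nat) (v : int) (s : seq nat) (i : nat) : rat :=
  ((2 * e)%:R - 1) / 2 * ((nth 0%N s i)%:R *
     ((sumn (drop i.+1 s))%:R - (sumn (take i s))%:R))
  + v%:~R * (nth 0%N s i)%:R / d%:R.

Lemma QE e d v (lam : 'I_d -> int) :
  ((n_lam e d lam)%:~R / 2 + pair_vtau d v lam : rat)
  = \sum_(i < size (ul d lam)) (nth 0 (ul d lam) i)%:~R * Cc e d v (assoc_part d lam) i.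
Proof.
have hR : pair_detR e d lam = pair_detg d lam *+ (2 * e).
  by rewrite /pair_detR sumr_const card_ord.
rewrite /n_lam hR /pair_vtau sumlamE detgE (Gind _ _ (ul_sorted d lam) (ul_uniq d lam)).
rewrite -assoc_partE.
set u := ul d lam; set s := assoc_part d lam.
set G := \sum_(i < size u) _.
have -> : G *+ (2 * e) - G = G * ((2 * e)%:R - 1) by rewrite mulrBr mulr1 mulr_natr.
rewrite /Cc intrM !intr_sumo.
under [X in _ = X]eq_bigr => i _ do rewrite mulrDr.
rewrite big_split /=; congr (_ + _).
  rewrite -mulrA mulr_suml; apply: eq_bigr => i _.
  rewrite !intrM intrB /= !intr_natr intrB /= intr_natr; ring.
rewrite mulr_sumr; apply: eq_bigr => i _.
rewrite intrM /= !intr_natr; ring.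
Qed.

Definition Tt (d : nat) (v : int) (s : seq nat) (i : nat) : rat :=
  (1 / 2 : rat) * (nth 0%N s i)%:R *
     ((sumn (take i s))%:R - (sumn (drop i.+1 s))%:R)
  + v%:~R * (nth 0%N s i)%:R / d%:R.

Lemma CT e d v s i : Cc e d v s i = Tt d v s i +
  (e * nth 0%N s i)%:R * ((sumn (drop i.+1 s))%:R - (sumn (take i s))%:R).
Proof. rewrite /Cc /Tt !natrM. set V := (_ / d%:R). clearbody V. by field. Qed.

Lemma CTint e d v s i : (Cc e d v s i \is a Num.int) = (Tt d v s i \is a Num.int).
Proof.
rewrite CT rpredDr //.
by rewrite rpredM ?rpredB ?rpred_nat.
Qed.

Fixpoint blocks (s : seq nat) (m : seq int) : seq int :=
  match s, m with
  | a :: s', x :: m' => nseq a x ++ blocks s' m'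
  | _, _ => [::]
  end.

Lemma blocks_size s m : size s = size m -> size (blocks s m) = sumn s.
Proof.
elim: s m => [|a s IH] [|x m] //= [h].
by rewrite size_cat size_nseq IH.
Qed.

Lemma blocks_sub s m y : y \in blocks s m -> y \in m.
Proof.
elim: s m => [|a s IH] [|x m] //=.
by rewrite mem_cat inE => /orP[/nseqP[-> _]|/IH ->]; rewrite ?eqxx ?orbT.
Qed.

Lemma blocks_mem s m : all (fun x => 0 < x)%N s -> size s = size m ->
  blocks s m =i m.
Proof.
elim: s m => [|a s IH] [|x m] //= /andP[ha hs] [hsz] y.
rewrite mem_cat inE IH //; congr (_ || _).
apply/nseqP/eqP => [[]//|->]; by [].
Qed.

Lemma blocks_count s m : uniq m -> size s = size m ->
  map (fun x => count_mem x (blocks s m)) m = s.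
Proof.
elim: s m => [|a s IH] [|x m] //= /andP[hx hu] [hsz].
rewrite count_cat count_nseq /= eqxx mul1n.
have -> : count_mem x (blocks s m) = 0%N.
  apply/count_memPn; apply/negP => /blocks_sub h; by rewrite h in hx.
rewrite addn0; congr (_ :: _).
rewrite -[RHS](IH m hu hsz); apply/eq_in_map => y hy.
rewrite count_cat count_nseq /=.
case: eqP => [e|//]; by move: hx; rewrite e hy.
Qed.

Definition fmu (i : nat) (b : bool) (j : nat) : int :=
  - ((2 * j)%N : int) + (if b && (j == i) then 1 else 0).

Lemma fmu_dec i b : {homo fmu i b : x y / (x < y)%N >-> y < x}.
Proof.
move=> x y hxy; rewrite /fmu.
case: (b && (x == i)); case: (b && (y == i)); lia.
Qed.

Definition mu i b k := mkseq (fmu i b) k.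

Lemma mu_sorted_gt i b k : sorted (fun x y : int => y < x) (mu i b k).
Proof. rewrite /mu /mkseq; apply: homo_sorted; [exact: fmu_dec | exact: iota_ltn_sorted]. Qed.

Lemma ge_trans : transitive (fun x y : int => y <= x).
Proof. by move=> a b c h1 h2; exact: le_trans h2 h1. Qed.

Lemma mu_uniq i b k : uniq (mu i b k).
Proof.
apply: (@sorted_uniq _ (fun x y : int => y < x)); last exact: mu_sorted_gt.
  by move=> a b' c h1 h2; exact: lt_trans h2 h1.
by move=> a; rewrite /= ltxx.
Qed.

Lemma mu_sorted i b k : sorted (fun x y : int => y <= x) (mu i b k).
Proof. by apply: (sub_sorted _ (mu_sorted_gt i b k)) => x y /ltW. Qed.

Definition lamb d s i b : 'I_d -> int := fun a => nth 0 (blocks s (mu i b (size s))) a.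

Lemma lst_lamb d s i b : sumn s = d -> lst d (lamb d s i b) = blocks s (mu i b (size s)).
Proof.
move=> hd; rewrite /lst /lamb.
have -> : [seq nth 0 (blocks s (mu i b (size s))) (val a) | a <- enum 'I_d]
   = map (nth 0 (blocks s (mu i b (size s)))) (map val (enum 'I_d)).
  by rewrite -map_comp.
rewrite val_enum_ord.
have hs : size (blocks s (mu i b (size s))) = d by rewrite blocks_size ?size_mkseq.
by rewrite -hs; exact: mkseq_nth.
Qed.

Lemma ul_lamb d s i b : is_part d s -> ul d (lamb d s i b) = mu i b (size s).
Proof.
move=> [hpos hd]; rewrite /ul lst_lamb //.
apply: (sorted_eq ge_trans).
- by move=> x y /andP[h1 h2]; apply: le_anti; rewrite h1 h2.
- by apply: sort_sorted => x y; exact: le_total.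
- exact: mu_sorted.
rewrite perm_sort; apply: uniq_perm; rewrite ?undup_uniq ?mu_uniq //.
by move=> x; rewrite mem_undup blocks_mem // size_mkseq.
Qed.

Lemma ap_lamb d s i b : is_part d s -> assoc_part d (lamb d s i b) = s.
Proof.
move=> hp; rewrite assoc_partE ul_lamb // lst_lamb; last by case: hp.
by apply: blocks_count; rewrite ?mu_uniq ?size_mkseq.
Qed.

Lemma part1 e d v s : in_S e d v s <->
  (is_part d s /\ forall i, (i < size s)%N -> Tt d v s i \is a Num.int).
Proof.
split.
- move=> [hp H]; split => // i hi.
  have h1 := H _ (ap_lamb d s i true hp).
  have h0 := H _ (ap_lamb d s i false hp).
  rewrite !QE !ap_lamb // !ul_lamb // !size_mkseq in h1 h0.
  have := rpredB h1 h0; rewrite -sumrB (bigD1 (Ordinal hi)) //= big1.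
    rewrite addr0 !nth_mkseq // /fmu eqxx /= -mulrBl intrD intrD opprD addrA.
    by rewrite mulr0z subr0 addrAC subrr add0r mul1r CTint.
  move=> j hj; rewrite !nth_mkseq // /fmu /=.
  have -> : (nat_of_ord j == i) = false.
    by apply/negP => /eqP e1; move: hj; rewrite -val_eqE /= e1 eqxx.
  by rewrite subrr.
- move=> [hp H]; split=> // lam hl.
  rewrite QE; apply: rpred_sum => j _; apply: rpredM; first exact: intr_int.
  rewrite CTint hl; apply: H.
  by rewrite -hl assoc_partE size_map.
Qed.

Lemma T0E a r v : Tt (a + sumn r) v (a :: r) 0 =
  (1 / 2) * a%:R * (0 - (sumn r)%:R) + v%:~R * a%:R / (a + sumn r)%:R.
Proof. by rewrite /Tt /= drop0. Qed.

Lemma T0int a r v (b := sumn r) : (0 < a + b)%N ->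
  (Tt (a + b) v (a :: r) 0 \is a Num.int) <->
  exists z : int, 2 * (a + b)%N%:Z * z = 2 * v * a%:Z - a%:Z * b%:Z * (a + b)%N%:Z.
Proof.
rewrite {}/b => hd; rewrite T0E.
have hd0 : ((a + sumn r)%N%:R : rat) != 0 by rewrite pnatr_eq0 -lt0n.
split.
- move/intrP => [z hz]; exists z; apply: (@intr_inj rat).
  rewrite !intrM intrB !intrM -hz /= -!natz !intr_natr.
  set B := (sumn r)%:R; set D := ((a + sumn r)%N)%:R in hd0 *.
  clearbody B D. by field.
- move=> [z hz]; apply/intrP; exists z.
  have := congr1 (fun x : int => (x%:~R : rat)) hz => /=.
  rewrite !intrM intrB !intrM /= -!natz !intr_natr => h.
  set B := (sumn r)%:R in h *; set D := ((a + sumn r)%N)%:R in hd0 h *.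
  clearbody B D.
  apply: (@mulfI _ (2 * D)); first by rewrite mulf_eq0 negb_or hd0 andbT.
  by rewrite h; field.
Qed.
Lemma noA (a b : nat) (v : int) (z : int) : (0 < a)%N -> (0 < b)%N ->
  2 * (a + b)%N%:Z * z = 2 * v * a%:Z - a%:Z * b%:Z * (a + b)%N%:Z ->
  ~ ((gcdn (a + b) `|v| = 1%N /\ ((a + b) %% 4 != 2)%N) \/
     (gcdn (a + b) `|v| = 2%N /\ ((a + b) %% 4 = 2)%N)).
Proof.
move=> ha hb hz.
have hdv : ((a + b)%N %| 2 * `|v| * a)%N.
  have : (((a + b)%N : int) %| 2 * v * a)%Z.
    apply/dvdzP; exists (2 * z + a%:Z * b%:Z); lia.
  by rewrite dvdzE !abszM.
case=> [[g1 hm]|[g2 hm]].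
- have cop : coprime (a + b) `|v| by rewrite /coprime g1.
  have h2a : ((a + b) %| 2 * a)%N.
    by rewrite -(Gauss_dvdr _ cop) mulnCA mulnA.
  have hab : a = b.
    move/dvdnP: h2a => [q hq]; case: q hq => [|[|q]] hq; nia.
  subst b.
  have hz2 : 2 * z = v - a%:Z * a%:Z.
    have ha0 : (2 * a%:Z) != 0 :> int by lia.
    apply: (mulfI ha0); lia.
  have hev : (2 %| a)%N by lia.
  move/dvdnP: hev => [c hc].
  have hv : (2 %| v)%Z by apply/dvdzP; exists (z + 2 * c%:Z * c%:Z); subst a; lia.
  have : (2 %| gcdn (a + a) `|v|)%N.
    by rewrite dvdn_gcd; apply/andP; split; [lia | move: hv; rewrite dvdzE].
  by rewrite g1.
- have [m hd] : exists m, (a + b = 2 * m /\ odd m)%N.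
    by exists ((a + b) %/ 2)%N; split; lia.
  case: hd => hd hmo.
  have h2v : (2 %| `|v|)%N by rewrite -g2 dvdn_gcdr.
  move/dvdnP: (h2v) => [w hw].
  have gmw : gcdn m w = 1%N.
    apply/eqP; rewrite -(eqn_pmul2l (isT : (0 < 2)%N)) muln_gcdr.
    by rewrite -hd mulnC -hw g2.
  have hma : (m %| a)%N.
    have : (m %| (2 * w) * a)%N.
      have e : (2 * (w * 2) * a = 2 * (2 * w * a))%N by lia.
      by move: hdv; rewrite hw e hd dvdn_pmul2l.
    rewrite Gauss_dvdr // coprimeMr /coprime gmw andbT.
    by rewrite -/(coprime m 2) coprimen2.
  have ham : a = m.
    move/dvdnP: hma => [q hq]; clear -hq hd ha hb; case: q hq => [|[|q]] hq; nia.
  subst a.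
  have hbm : b = m by lia.
  subst b.
  have hz2 : 2 * z = v - m%:Z * m%:Z.
    have hm0 : (2 * m%:Z) != 0 :> int by lia.
    apply: (mulfI hm0); clear -hz; lia.
  have hv : (2 %| v)%Z by rewrite dvdzE.
  move/dvdzP: hv => [u hu].
  have [t ht] : exists t, m = (2 * t).+1.
    by exists (m./2); rewrite -[m in LHS]odd_double_half hmo; lia.
  subst m; clear -hz2 hu; lia.
Qed.

Lemma yesB d (v : int) : (0 < d)%N ->
  ~ ((gcdn d `|v| = 1%N /\ (d %% 4 != 2)%N) \/ (gcdn d `|v| = 2%N /\ (d %% 4 = 2)%N)) ->
  exists a b (z : int), [/\ (0 < a)%N, (0 < b)%N, (a + b = d)%N &
    2 * (a + b)%N%:Z * z = 2 * v * a%:Z - a%:Z * b%:Z * (a + b)%N%:Z].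
Proof.
move=> hd hnc.
have gpos : (0 < gcdn d `|v|)%N by rewrite gcdn_gt0 hd.
have gd : (gcdn d `|v| %| d)%N := dvdn_gcdl _ _.
have gv : ((gcdn d `|v|)%:Z %| v)%Z by rewrite dvdzE /= dvdn_gcdr.
move: gpos gd gv hnc; set g := gcdn d `|v| => gpos gd gv hnc.
have [g1|g1] := eqVneq g 1%N.
  have hm : (d %% 4 = 2)%N.
    case: (eqVneq (d %% 4)%N 2%N) => // h; exfalso; apply: hnc; left; split => //; exact/eqP.
  have hv : ~~ (2 %| v)%Z.
    apply/negP => h2; have : (2 %| g)%N.
      by rewrite dvdn_gcd; apply/andP; split; [lia | move: h2; rewrite dvdzE].
    by rewrite g1.
  set m := (d %/ 2)%N.
  have [t ht] : exists t, m = (2 * t).+1 by exists (m %/ 2)%N; lia.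
  exists m, m, (((v - 1) %/ 2)%Z - 2 * t%:Z * t%:Z - 2 * t%:Z); split; try lia.
  have hv1 : v = 2 * ((v - 1) %/ 2)%Z + 1 by lia.
  set q := ((v - 1) %/ 2)%Z in hv1 *.
  rewrite ht; clear -hv1; lia.
have [g2|g2] := eqVneq g 2%N.
  have hm : (d %% 4 != 2)%N.
    apply/negP => /eqP h; apply: hnc; right; split => //; exact/eqP.
  rewrite g2 in gd gv.
  move/dvdzP: gv => [u hu].
  set n := (d %/ 4)%N.
  have hn : d = (4 * n)%N by lia.
  exists (2 * n)%N, (2 * n)%N, (u - 2 * n%:Z * n%:Z); split; try lia.
have g3 : (3 <= g)%N by lia.
move/dvdnP: gd => [c hc].
move/dvdzP: gv => [w hw].
have cpos : (0 < c)%N by move: hd; rewrite hc muln_gt0 => /andP[].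
have [h hh] : exists h, g = (2 * h).+1 \/ g = (2 * h).+2.
  by exists ((g.-1) %/ 2)%N; lia.
case: hh => hg.
  exists c, (2 * h * c)%N, (w - c%:Z * c%:Z * h%:Z); split; try nia.
exists (2 * c)%N, (2 * h * c)%N, (2 * w - 2 * c%:Z * c%:Z * h%:Z); split; try nia.
Qed.

Lemma T1E a b v : (0 < a + b)%N ->
  Tt (a + b) v [:: a; b] 1 = v%:~R - Tt (a + b) v [:: a; b] 0.
Proof.
move=> hab; rewrite /Tt /= !addn0.
have h : ((a + b)%N%:R : rat) != 0 by rewrite pnatr_eq0 -lt0n.
move: h; rewrite natrD => h.
field. done.
Qed.

Theorem lemma8p6 (e d : nat) (v : int) (he : (1 <= e)%N) (hd : (1 <= d)%N) :
  (forall s : seq nat,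
     in_S e d v s <->
     (is_part d s /\
      forall i : nat, (i < size s)%N ->
        ((1 / 2 : rat) * (nth 0%N s i)%:R *
           ((sumn (take i s))%:R - (sumn (drop i.+1 s))%:R)
         + v%:~R * (nth 0%N s i)%:R / d%:R) \is a Num.int))
  /\
  ((forall s : seq nat, in_S e d v s <-> s = [:: d]) <->
   ((gcdn d `|v|%N = 1%N /\ (d %% 4 != 2)%N) \/
    (gcdn d `|v|%N = 2%N /\ (d %% 4 = 2)%N))).
Proof.
split; first by move=> s; exact: part1.
have inSd : in_S e d v [:: d].
  apply/part1; split; first by split => /=; rewrite ?andbT ?addn0.
  move=> [|i] // _; rewrite /Tt /= subrr mulr0 add0r mulfK ?intr_int //.
  by rewrite pnatr_eq0 -lt0n.
split.
- move=> H; case: (Classical_Prop.classic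
    ((gcdn d `|v|%N = 1%N /\ (d %% 4 != 2)%N) \/
     (gcdn d `|v|%N = 2%N /\ (d %% 4 = 2)%N))) => // hnc; exfalso.
  have [a [b [z [ha hb hab hz]]]] := yesB _ _ hd hnc.
  have : in_S e d v [:: a; b].
    apply/part1; split.
      by split => /=; rewrite ?ha ?hb ?addn0.
    subst d.
    have T0 : Tt (a + b) v [:: a; b] 0 \is a Num.int.
      have := T0int a [:: b] v; rewrite /= !addn0 => [[//|_ ->]] //.
      by exists z.
    move=> [|[|i]] //= _.
    by rewrite T1E // rpredB ?intr_int.
  by move/H.
- move=> hc s; split; last by move=> ->.
  move/part1 => [[hpos hsum] hT].
  case: s hpos hsum hT => [|a [|b r]] /= hpos hsum hT.
  + by move: hd; rewrite -hsum.
  + by rewrite -hsum addn0.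
  exfalso.
  have T0 := hT 0%N isT.
  move: hpos => /and3P[ha hb _].
  subst d.
  have [z hz] := (T0int a (b :: r) v hd).1 T0.
  have hb' : (0 < sumn (b :: r))%N by rewrite /= addn_gt0 hb.
  exact: (noA _ _ _ _ ha hb' hz hc).
Qed.
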